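(* In the setting described in the context, there is a constant $M_2>0$, independent of $\epsilon\in(0,1)$, such that for all $x\in\mathbb{R}$ and all $t\geq0$, $$|v^\epsilon(x,t)|\leq \frac{M_2}{\epsilon^\alpha},\qquad \Big|\frac{\partial}{\partial x}v^\epsilon(x,t)\Big|\leq \frac{M_2}{\epsilon^{2\alpha}}.$$
   Context: Let $\mathcal{C}_b(\mathbb{R})$ denote the Banach space of bounded continuous real functions on $\mathbb{R}$ with the sup norm. For a real function $u$ set $u^+=\max(0,u)$, $u^-=\max(0,-u)$. For $0<\epsilon<1$ let $u^\epsilon:\mathbb{R}\times[0,\infty)\to\mathbb{R}$ be $2\pi$-periodic in $x$, with $t\mapsto u^\epsilon(\cdot,t)$ continuous from $[0,\infty)$ into $\mathcal{C}_b(\mathbb{R})$, and assume there is $M_1>0$ with $|u^\epsilon(x,t)|\leq M_1$ for all $\epsilon,x,t\ge0$. Let $v_0^\epsilon\in\mathcal{C}_b(\mathbb{R})$ be $2\pi$-periodic with $\sup_{\epsilon}\int_{-\pi}^{\pi}|v_0^\epsilon|dx<\infty$. Let $X^\epsilon$ be the unique global $\mathcal{C}^1$ solution $[0,\infty)\to\mathcal{C}_b(\mathbb{R})$ of $$\frac{d}{dt}X^\epsilon(x,t)=\frac{1}{\epsilon}\big[X^\epsilon(x-\epsilon,t)u^{\epsilon+}(x-\epsilon,t)-X^\epsilon(x,t)|u^{\epsilon}(x,t)|+X^\epsilon(x+\epsilon,t)u^{\epsilon-}(x+\epsilon,t)\big],\quad X^\epsilon(x,0)=v_0^\epsilon(x).$$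 Let $\phi\in\mathcal{C}^\infty(\mathbb{R})$ have compact support with $\int\phi=1$, let $\alpha\in]0,1]$, $\phi_{\epsilon^\alpha}(x)=\epsilon^{-\alpha}\phi(x/\epsilon^\alpha)$, and define $v^\epsilon(x,t)=(X^\epsilon(\cdot,t)*\phi_{\epsilon^\alpha})(x)$. *)

(* Defs.v *)
From Stdlib Require Import Reals.
From Coquelicot Require Export Coquelicot.
Open Scope R_scope.

Definition Cb (f : R -> R) : Prop :=
  (forall x, continuous f x) /\ exists B, forall x, Rabs (f x) <= B.

Definition periodic2pi (f : R -> R) : Prop := forall x, f (x + 2 * PI) = f x.

(* t |-> w(.,t) is continuous from [0,oo) into C_b(R) (sup norm) *)
Definition sup_cont_Cb (w : R -> R -> R) : Prop :=
  (forall t, 0 <= t -> Cb (fun x => w x t)) /\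
  forall t, 0 <= t -> forall eta, 0 < eta -> exists delta, 0 < delta /\
    forall s, 0 <= s -> Rabs (s - t) < delta ->
      forall x, Rabs (w x s - w x t) <= eta.

(* t |-> w(.,t) is differentiable from [0,oo) into C_b(R) (sup norm),
   with derivative t |-> dw(.,t) (one-sided at t = 0) *)
Definition sup_derivative (w dw : R -> R -> R) : Prop :=
  forall t, 0 <= t -> forall eta, 0 < eta -> exists delta, 0 < delta /\
    forall s, 0 <= s -> s <> t -> Rabs (s - t) < delta ->
      forall x, Rabs ((w x s - w x t) / (s - t) - dw x t) <= eta.

Definition upos (a : R) : R := Rmax 0 a.
Definition uneg (a : R) : R := Rmax 0 (- a).

Definition rhs (eps : R) (X u : R -> R -> R) (x t : R) : R :=
  / eps * (X (x - eps) t * upos (u (x - eps) t)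
           - X x t * Rabs (u x t)
           + X (x + eps) t * uneg (u (x + eps) t)).

Definition smooth (phi : R -> R) : Prop := forall n x, ex_derive_n phi n x.

Definition mollif (phi : R -> R) (delta : R) (x : R) : R := / delta * phi (x / delta).

Definition conv (f g : R -> R) (x : R) : R :=
  RInt_gen (fun y => f y * g (x - y)) (Rbar_locally m_infty) (Rbar_locally p_infty).

(* Main.v *)
Require Import Defs.
From Stdlib Require Import Reals Lra Classical.
From Coquelicot Require Import Coquelicot.
Open Scope R_scope.

Lemma real_ind (a b : R) (G : R -> Prop) :
  a <= b -> G a ->
  (forall t, a < t <= b -> (forall r, a <= r < t -> G r) -> G t) ->
  (forall t, a <= t < b -> G t -> exists d, 0 < d /\ forall s, t < s < t + d -> s <= b -> G s) ->
  forall t, a <= t <= b -> G t.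
Proof.
  intros hab Ga Hl Hr.
  set (E := fun s => a <= s <= b /\ forall r, a <= r <= s -> G r).
  assert (bE : bound E). { exists b. intros s [Hs _]. lra. }
  assert (nE : exists x, E x). { exists a. split. lra. intros r Hr'. replace r with a by lra. exact Ga. }
  destruct (completeness E bE nE) as [m [Hub Hlub]].
  assert (am : a <= m). { apply Hub. destruct nE as [x Hx]. unfold E. split. lra. intros r Hr'. replace r with a by lra. exact Ga. }
  assert (mb : m <= b). { apply Hlub. intros s [Hs _]. lra. }
  assert (H1 : forall r, a <= r < m -> G r).
  { intros r Hr'. destruct (classic (exists s, E s /\ r < s)) as [[s [[_ Hs] Hrs]]|Hn].
    - apply Hs. lra.
    - exfalso. assert (m <= r). { apply Hlub. intros s Hs. destruct (Rle_or_lt s r) as [h|h]. exact h. exfalso. apply Hn. exists s. split; assumption. }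
      lra. }
  assert (Gm : G m). { destruct (Req_dec m a) as [e|ne]. rewrite e; exact Ga. apply Hl. lra. exact H1. }
  assert (mb' : m = b).
  { destruct (Req_dec m b) as [e|ne]; [exact e|]. exfalso.
    destruct (Hr m ltac:(lra) Gm) as [d [dpos Hd]].
    set (s := m + Rmin d (b - m) / 2).
    assert (Hmin1 : Rmin d (b - m) <= d) by apply Rmin_l.
    assert (Hmin2 : Rmin d (b - m) <= b - m) by apply Rmin_r.
    assert (Hmin3 : 0 < Rmin d (b - m)) by (apply Rmin_pos; lra).
    assert (Es : E s).
    { split. unfold s; lra. intros r Hr'.
      destruct (Rlt_or_le r m) as [h|h]. apply H1; lra.
      destruct (Req_dec r m) as [e|ne2]. rewrite e; exact Gm.
      apply Hd. unfold s in Hr'; lra. unfold s in Hr'; lra. }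
    assert (s <= m) by (apply Hub; exact Es). unfold s in H; lra. }
  intros t Ht. destruct (Req_dec t b) as [e|ne]. rewrite e, <- mb'. exact Gm.
  apply H1. lra.
Qed.

Lemma exR (f : R -> R) p q : (forall x, continuous f x) -> ex_RInt f p q.
Proof. intros H. apply (@ex_RInt_continuous R_CompleteNormedModule). intros; apply H. Qed.

Lemma per_shift (f : R -> R) (c a : R) :
  (forall x, continuous f x) -> (forall x, f (x + 2*PI) = f x) ->
  RInt f (a + c) (a + c + 2*PI) = RInt f a (a+2*PI).
Proof.
  intros Hc Hp.
  assert (ex : forall p q, ex_RInt f p q) by (intros; apply exR; exact Hc).
  rewrite <- (RInt_Chasles f (a+c) a (a+c+2*PI)) by apply ex.
  rewrite <- (RInt_Chasles f a (a+2*PI) (a+c+2*PI)) by apply ex.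
  assert (E : RInt f (a + 2 * PI) (a + c + 2 * PI) = RInt f a (a+c)).
  { replace (a + 2*PI) with (1 * a + 2*PI) by ring.
    replace (a + c + 2*PI) with (1 * (a+c) + 2*PI) by ring.
    rewrite <- RInt_comp_lin by (replace (1*a+2*PI) with (a + 2*PI) by ring; apply ex).
    apply RInt_ext. intros x _. change (scal 1 (f (1 * x + 2 * PI)) = f x). rewrite (scal_one (V:=R_NormedModule)). rewrite Rmult_1_l. apply Hp. }
  rewrite E. rewrite <- (opp_RInt_swap f a (a+c)) by apply ex.
  change (plus (opp (RInt f a (a + c))) (plus (RInt f a (a + 2 * PI)) (RInt f a (a + c))) = RInt f a (a + 2 * PI)).
  unfold plus, opp; simpl. ring.
Qed.

Lemma upos_prop p : 0 <= upos p <= Rabs p.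
Proof. unfold upos, Rmax. destruct (Rle_dec 0 p); unfold Rabs; destruct (Rcase_abs p); lra. Qed.
Lemma uneg_prop p : 0 <= uneg p <= Rabs p.
Proof. unfold uneg, Rmax. destruct (Rle_dec 0 (-p)); unfold Rabs; destruct (Rcase_abs p); lra. Qed.
Lemma upos_uneg p : upos p + uneg p = Rabs p.
Proof. unfold upos, uneg, Rmax. destruct (Rle_dec 0 p); destruct (Rle_dec 0 (-p)); unfold Rabs; destruct (Rcase_abs p); lra. Qed.

Lemma comb_bound M A B C p q r : Rabs p <= M -> Rabs q <= M -> Rabs r <= M ->
  Rabs (A * upos p - B * Rabs q + C * uneg r) <= M * (Rabs A + Rabs B + Rabs C).
Proof.
  intros hp hq hr. pose proof (upos_prop p). pose proof (uneg_prop r).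
  pose proof (Rabs_pos q).
  eapply Rle_trans. apply Rabs_triang. eapply Rle_trans. apply Rplus_le_compat_r. apply Rabs_triang.
  rewrite Rabs_Ropp, !Rabs_mult, Rabs_Rabsolu. rewrite (Rabs_pos_eq (upos p)) by lra. rewrite (Rabs_pos_eq (uneg r)) by lra.
  pose proof (Rabs_pos A); pose proof (Rabs_pos B); pose proof (Rabs_pos C).
  assert (Rabs A * upos p <= Rabs A * M) by (apply Rmult_le_compat_l; lra).
  assert (Rabs B * Rabs q <= Rabs B * M) by (apply Rmult_le_compat_l; lra).
  assert (Rabs C * uneg r <= Rabs C * M) by (apply Rmult_le_compat_l; lra).
  lra.
Qed.

Lemma zero_of_small y : (forall g, 0 < g -> Rabs y <= g) -> y = 0.
Proof.
  intros H. assert (Rabs y <= 0). { apply Rle_plus_epsilon. intros e he. rewrite Rplus_0_l. auto. }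
  pose proof (Rabs_pos y). destruct (Req_dec y 0); auto. pose proof (Rabs_pos_lt y H2). lra.
Qed.

Lemma tri3 A B C D : Rabs (A - B) <= Rabs (C - D) + Rabs (C - A) + Rabs (D - B).
Proof.
  unfold Rabs; destruct (Rcase_abs (A-B)); destruct (Rcase_abs (C-D)); destruct (Rcase_abs (C-A)); destruct (Rcase_abs (D-B)); lra.
Qed.

Lemma alg_step A0 A1 B0 B1 R1 R0 h e c : 0 < h ->
  Rabs ((A1 - A0)/h - R1) <= e/2 -> Rabs ((B1-B0)/h - R0) <= e/2 ->
  Rabs (A0 - B0) <= c -> Rabs (R1 - R0) <= e -> Rabs (A1 - B1) <= c + 2*e*h.
Proof.
  intros hh H1 H2 H3 H4.
  replace (A1 - B1) with ((A0 - B0) + h*(R1-R0) + h*(((A1 - A0)/h - R1) - ((B1-B0)/h - R0))) by (field; lra).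
  eapply Rle_trans. apply Rabs_triang. eapply Rle_trans. apply Rplus_le_compat_r. apply Rabs_triang.
  rewrite !Rabs_mult, (Rabs_pos_eq h) by lra.
  assert (Rabs (((A1 - A0)/h - R1) - ((B1-B0)/h - R0)) <= e).
  { assert (G : forall p q, Rabs (p - q) <= Rabs p + Rabs q) by (intros p q; unfold Rabs; destruct (Rcase_abs (p-q)); destruct (Rcase_abs p); destruct (Rcase_abs q); lra).
    eapply Rle_trans. apply G. lra. }
  assert (h * Rabs (R1 - R0) <= h * e) by (apply Rmult_le_compat_l; lra).
  assert (h * Rabs (((A1 - A0)/h - R1) - ((B1-B0)/h - R0)) <= h * e) by (apply Rmult_le_compat_l; lra).
  lra.
Qed.

Lemma stepA (eps M1 : R) (u X : R -> R -> R) (a : R) :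
  0 < eps -> 0 < M1 ->
  (forall t, 0 <= t -> periodic2pi (fun x => u x t)) ->
  (forall x t, 0 <= t -> Rabs (u x t) <= M1) ->
  sup_cont_Cb X -> sup_derivative X (rhs eps X u) ->
  0 <= a -> (forall x, X (x + 2*PI) a = X x a) ->
  forall t, a <= t <= a + eps/(6*M1) -> forall x, X (x+2*PI) t = X x t.
Proof.
  intros he hM Hper Hub Hcont Hder Ha HYa.
  set (T0 := eps/(6*M1)).
  assert (hT0 : 0 < T0) by (unfold T0; apply Rdiv_lt_0_compat; lra).
  assert (Main: forall eta, 0 < eta -> forall t, a <= t <= a + T0 -> forall x,
             Rabs (X (x+2*PI) t - X x t) <= 2*eta*(t-a)).
  { intros eta heta. apply (real_ind a (a + T0) (fun t => forall x, Rabs (X (x+2*PI) t - X x t) <= 2*eta*(t-a))).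
    - lra.
    - intros x. rewrite HYa. rewrite Rminus_diag, Rabs_R0. lra.
    - intros t Ht Hprev x. apply Rle_plus_epsilon; intros g hg.
      destruct Hcont as [_ Hc]. destruct (Hc t ltac:(lra) (g/2) ltac:(lra)) as [dl [hdl Hdl]].
      set (r := t - Rmin dl (t-a) / 2).
      assert (Hm1 : Rmin dl (t - a) <= dl) by apply Rmin_l.
      assert (Hm2 : Rmin dl (t - a) <= t - a) by apply Rmin_r.
      assert (Hm3 : 0 < Rmin dl (t - a)) by (apply Rmin_pos; lra).
      assert (Hr : a <= r < t) by (unfold r; lra).
      assert (Hrt : Rabs (r - t) < dl) by (unfold r; rewrite Rabs_left; lra).
      pose proof (Hprev r Hr x) as P0.
      pose proof (Hdl r ltac:(lra) Hrt (x + 2*PI)) as P1.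
      pose proof (Hdl r ltac:(lra) Hrt x) as P2.
      pose proof (tri3 (X (x + 2*PI) t) (X x t) (X (x + 2*PI) r) (X x r)) as T.
      assert (2*eta*(r-a) <= 2*eta*(t-a)) by (apply Rmult_le_compat_l; lra).
      lra.
    - intros t Ht Gt. destruct (Hder t ltac:(lra) (eta/2) ltac:(lra)) as [d [hd Hd]].
      exists d. split; [exact hd|]. intros s Hs Hsb x.
      assert (hst : Rabs (s - t) < d) by (rewrite Rabs_pos_eq; lra).
      pose proof (Hd s ltac:(lra) ltac:(lra) hst (x + 2*PI)) as Q1.
      pose proof (Hd s ltac:(lra) ltac:(lra) hst x) as Q2.
      assert (Hu' : forall y, u (y + 2*PI) t = u y t) by (intro y; exact (Hper t ltac:(lra) y)).
      assert (HD : Rabs (rhs eps X u (x + 2*PI) t - rhs eps X u x t) <= eta).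
      { unfold rhs.
        replace (x + 2*PI - eps) with ((x - eps) + 2*PI) by ring.
        replace (x + 2*PI + eps) with ((x + eps) + 2*PI) by ring.
        rewrite !Hu'.
        replace (/ eps * (X (x - eps + 2 * PI) t * upos (u (x - eps) t) - X (x + 2 * PI) t * Rabs (u x t) +
                  X (x + eps + 2 * PI) t * uneg (u (x + eps) t)) -
                 / eps * (X (x - eps) t * upos (u (x - eps) t) - X x t * Rabs (u x t) +
                  X (x + eps) t * uneg (u (x + eps) t)))
          with (/ eps * ((X (x - eps + 2 * PI) t - X (x - eps) t) * upos (u (x - eps) t)
                 - (X (x + 2 * PI) t - X x t) * Rabs (u x t)
                 + (X (x + eps + 2 * PI) t - X (x + eps) t) * uneg (u (x + eps) t))) by ring.
        rewrite Rabs_mult, Rabs_pos_eq by (left; apply Rinv_0_lt_compat; lra).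
        eapply Rle_trans. apply Rmult_le_compat_l. left; apply Rinv_0_lt_compat; lra.
        apply comb_bound; apply Hub; lra.
        pose proof (Gt (x - eps)); pose proof (Gt x); pose proof (Gt (x+eps)).
        assert (M1 * (Rabs (X (x - eps + 2 * PI) t - X (x - eps) t) + Rabs (X (x + 2 * PI) t - X x t) +
                 Rabs (X (x + eps + 2 * PI) t - X (x + eps) t)) <= M1 * (6 * eta * T0)).
        { apply Rmult_le_compat_l. lra.
          assert (2*eta*(t-a) <= 2*eta*T0) by (apply Rmult_le_compat_l; lra). lra. }
        assert (E : M1 * (6 * eta * T0) = eta * eps) by (unfold T0; field; lra).
        rewrite E in H2.
        apply Rle_trans with (/eps * (eta * eps)).
        apply Rmult_le_compat_l. left; apply Rinv_0_lt_compat; lra. exact H2.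
        right; field; lra. }
      pose proof (alg_step (X (x + 2*PI) t) (X (x + 2*PI) s) (X x t) (X x s)
                    (rhs eps X u (x + 2*PI) t) (rhs eps X u x t) (s - t) eta (2*eta*(t-a))
                    ltac:(lra) Q1 Q2 (Gt x) HD) as F.
      replace (2*eta*(s-a)) with (2*eta*(t-a) + 2*eta*(s-t)) by ring. exact F. }
  intros t Ht x. apply Rminus_diag_uniq. apply zero_of_small. intros g hg.
  pose proof (Main (g/(2*T0)) ltac:(apply Rdiv_lt_0_compat; lra) t Ht x) as M.
  assert (2 * (g / (2 * T0)) * (t - a) <= g).
  { apply Rle_trans with (2 * (g / (2 * T0)) * T0).
    apply Rmult_le_compat_l. assert (0 < g/(2*T0)) by (apply Rdiv_lt_0_compat; lra). lra. lra.
    right; field; lra. }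
  lra.
Qed.

Lemma X_periodic (eps M1 : R) (u X : R -> R -> R) :
  0 < eps -> 0 < M1 ->
  (forall t, 0 <= t -> periodic2pi (fun x => u x t)) ->
  (forall x t, 0 <= t -> Rabs (u x t) <= M1) ->
  sup_cont_Cb X -> sup_derivative X (rhs eps X u) ->
  (forall x, X (x + 2*PI) 0 = X x 0) ->
  forall t, 0 <= t -> forall x, X (x+2*PI) t = X x t.
Proof.
  intros he hM Hper Hub Hcont Hder H0.
  set (T0 := eps/(6*M1)).
  assert (hT0 : 0 < T0) by (unfold T0; apply Rdiv_lt_0_compat; lra).
  assert (Ind : forall n : nat, forall t, 0 <= t <= INR n * T0 -> forall x, X (x+2*PI) t = X x t).
  { induction n as [|n IH].
    - intros t Ht x. simpl in Ht. replace t with 0 by lra. apply H0.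
    - intros t Ht x. rewrite S_INR in Ht.
      pose proof (pos_INR n).
      destruct (Rle_or_lt t (INR n * T0)) as [h|h].
      + apply IH. lra.
      + apply (stepA eps M1 u X (INR n * T0)); auto.
        * apply Rmult_le_pos; lra.
        * apply IH. split. apply Rmult_le_pos; lra. lra.
        * fold T0. lra. }
  intros t Ht x. destruct (INR_archimed T0 t hT0) as [n Hn].
  apply (Ind n). lra.
Qed.

Lemma shift_int (A : R -> R) (c : R) :
  (forall x, continuous A x) -> (forall x, A (x + 2*PI) = A x) ->
  RInt (fun x => A (x + c)) (-PI) PI = RInt A (-PI) PI.
Proof.
  intros HA Hp.
  transitivity (RInt A (1 * -PI + c) (1 * PI + c)).
  { rewrite <- (@RInt_comp_lin R_CompleteNormedModule A 1 c (-PI) PI) by (apply exR; exact HA).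
    apply RInt_ext. intros x _. change (A (x + c) = 1 * A (1 * x + c)). rewrite !Rmult_1_l. reflexivity. }
  pose proof (per_shift A c (-PI) HA Hp) as E.
  replace (1 * - PI + c) with (- PI + c) by ring.
  replace (1 * PI + c) with (- PI + c + 2 * PI) by ring.
  rewrite E. f_equal. ring.
Qed.

Lemma is_RInt_R (f : R -> R) : (forall x, continuous f x) ->
  is_RInt f (-PI) PI (RInt f (-PI) PI).
Proof. intros H. apply (@RInt_correct R_CompleteNormedModule). apply exR; exact H. Qed.

Lemma int_combo (f A B : R -> R) (k c e : R) :
  (forall x, continuous f x) -> (forall x, continuous A x) -> (forall x, continuous B x) ->
  (forall x, A (x + 2*PI) = A x) -> (forall x, B (x + 2*PI) = B x) ->
  RInt (fun x => f x + k * (A (x - e) - A x) + k * (B (x + e) - B x) + c) (-PI) PI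
  = RInt f (-PI) PI + 2*PI*c.
Proof.
  intros Hf HA HB pA pB.
  apply (@is_RInt_unique R_CompleteNormedModule).
  assert (cA : forall x, continuous (fun y => A (y - e)) x).
  { intro x. apply (continuous_comp (fun y => y - e) A). apply (continuous_minus (fun y => y) (fun _ => e)). apply continuous_id. apply continuous_const. apply HA. }
  assert (cB : forall x, continuous (fun y => B (y + e)) x).
  { intro x. apply (continuous_comp (fun y => y + e) B). apply (continuous_plus (fun y => y) (fun _ => e)). apply continuous_id. apply continuous_const. apply HB. }
  pose proof (is_RInt_R f Hf) as I1.
  pose proof (is_RInt_R _ HA) as I3.
  pose proof (is_RInt_R _ HB) as I5.
  assert (E2 : RInt (fun y => A (y - e)) (-PI) PI = RInt A (-PI) PI).
  { rewrite <- (shift_int A (-e)) by assumption. apply RInt_ext. intros; unfold Rminus; reflexivity. }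
  assert (E4 : RInt (fun y => B (y + e)) (-PI) PI = RInt B (-PI) PI) by (apply shift_int; assumption).
  assert (I2 : is_RInt (fun y => A (y - e)) (-PI) PI (RInt A (-PI) PI)).
  { rewrite <- E2. apply is_RInt_R. exact cA. }
  assert (I4 : is_RInt (fun y => B (y + e)) (-PI) PI (RInt B (-PI) PI)).
  { rewrite <- E4. apply is_RInt_R. exact cB. }
  pose proof (is_RInt_minus _ _ _ _ _ _ I2 I3) as J1.
  pose proof (is_RInt_minus _ _ _ _ _ _ I4 I5) as J2.
  pose proof (is_RInt_scal _ _ _ k _ J1) as K1.
  pose proof (is_RInt_scal _ _ _ k _ J2) as K2.
  pose proof (is_RInt_const (-PI) PI c) as K3.
  pose proof (is_RInt_plus _ _ _ _ _ _ (is_RInt_plus _ _ _ _ _ _ (is_RInt_plus _ _ _ _ _ _ I1 K1) K2) K3) as L.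
  match type of L with is_RInt _ _ _ ?v => replace (RInt f (-PI) PI + 2*PI*c) with v end.
  2: { unfold minus; unfold plus, scal, opp, mult; simpl. unfold mult; simpl. ring. }
  eapply is_RInt_ext; [|exact L].
  intros x _. unfold minus; unfold plus, scal, opp, mult; simpl. unfold mult; simpl. ring.
Qed.

Lemma cmul (f g : R -> R) x : continuous f x -> continuous g x -> continuous (fun y => f y * g y) x.
Proof. intros H1 H2. apply (@continuous_mult R_UniformSpace R_AbsRing f g x H1 H2). Qed.
Lemma cplus (f g : R -> R) x : continuous f x -> continuous g x -> continuous (fun y => f y + g y) x.
Proof. intros H1 H2. apply (@continuous_plus R_UniformSpace R_AbsRing R_NormedModule f g x H1 H2). Qed.
Lemma cconst (c : R) x : continuous (fun _ : R => c) x.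
Proof. apply continuous_const. Qed.
Lemma cabs (f : R -> R) x : continuous f x -> continuous (fun y => Rabs (f y)) x.
Proof. apply continuous_Rabs_comp. Qed.
Lemma upos_formula z : / 2 * (z + Rabs z) = upos z.
Proof. unfold upos, Rmax. destruct (Rle_dec 0 z); unfold Rabs; destruct (Rcase_abs z); lra. Qed.
Lemma uneg_formula z : / 2 * (- z + Rabs z) = uneg z.
Proof. unfold uneg, Rmax. destruct (Rle_dec 0 (- z)); unfold Rabs; destruct (Rcase_abs z); lra. Qed.
Lemma neg1 z : -1 * z = - z.
Proof. ring. Qed.
Lemma cupos (f : R -> R) x : continuous f x -> continuous (fun y => upos (f y)) x.
Proof.
  intros H. apply (continuous_ext (fun y => / 2 * (f y + Rabs (f y)))).
  - intro y. apply upos_formula.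
  - apply cmul. apply cconst. apply cplus. exact H. apply cabs. exact H.
Qed.
Lemma cuneg (f : R -> R) x : continuous f x -> continuous (fun y => uneg (f y)) x.
Proof.
  intros H. apply (continuous_ext (fun y => / 2 * (- f y + Rabs (f y)))).
  - intro y. apply uneg_formula.
  - apply cmul. apply cconst. apply cplus. apply (continuous_ext (fun y => (-1) * f y)). intro; apply neg1.
    apply cmul. apply cconst. exact H. apply cabs. exact H.
Qed.
Lemma cshift (f : R -> R) c x : (forall y, continuous f y) -> continuous (fun y => f (y + c)) x.
Proof. intros H. apply (continuous_comp (fun y => y + c) f). apply cplus. apply continuous_id. apply cconst. apply H. Qed.

Lemma int_const_add (f : R -> R) (c : R) : (forall x, continuous f x) ->
  RInt (fun x => f x + c) (-PI) PI = RInt f (-PI) PI + 2*PI*c.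
Proof.
  intros Hf. rewrite <- (int_combo f (fun _ => 0) (fun _ => 0) 0 c 0); auto.
  apply RInt_ext. intros x _. rewrite Rminus_0_r, !Rmult_0_l, !Rplus_0_r. reflexivity. intros; apply cconst. intros; apply cconst.
Qed.

Lemma pos_comb (h e xa xb xc ua ub uc M : R) : 0 < e -> 0 <= h -> h * M <= e -> Rabs ub <= M ->
  Rabs (xb + h * (/e * (xa * upos ua - xb * Rabs ub + xc * uneg uc))) <=
  Rabs xb + h/e * (upos ua * Rabs xa - upos ub * Rabs xb) + h/e * (uneg uc * Rabs xc - uneg ub * Rabs xb).
Proof.
  intros he hh hM hub.
  set (k := h / e).
  assert (hk : 0 <= k) by (unfold k; apply Rmult_le_pos; [lra| left; apply Rinv_0_lt_compat; lra]).
  assert (hk1 : k * Rabs ub <= 1).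
  { unfold k. apply Rmult_le_reg_l with e. lra.
    replace (e * (h / e * Rabs ub)) with (h * Rabs ub) by (field; lra).
    pose proof (Rabs_pos ub). assert (h * Rabs ub <= h * M) by (apply Rmult_le_compat_l; lra). lra. }
  pose proof (upos_prop ua); pose proof (uneg_prop uc); pose proof (upos_uneg ub).
  replace (xb + h * (/e * (xa * upos ua - xb * Rabs ub + xc * uneg uc)))
    with ((1 - k * Rabs ub) * xb + (k * upos ua) * xa + (k * uneg uc) * xc) by (unfold k; field; lra).
  eapply Rle_trans. apply Rabs_triang. eapply Rle_trans. apply Rplus_le_compat_r. apply Rabs_triang.
  rewrite (Rabs_mult (1 - k * Rabs ub) xb), (Rabs_mult (k * upos ua) xa), (Rabs_mult (k * uneg uc) xc).
  rewrite (Rabs_pos_eq (1 - k * Rabs ub)) by lra.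
  rewrite (Rabs_pos_eq (k * upos ua)) by (apply Rmult_le_pos; lra).
  rewrite (Rabs_pos_eq (k * uneg uc)) by (apply Rmult_le_pos; lra).
  fold k. rewrite <- H1. right. ring.
Qed.

Lemma L1_bound (eps M1 K : R) (u X : R -> R -> R) :
  0 < eps -> 0 < M1 ->
  (forall t, 0 <= t -> periodic2pi (fun x => u x t)) ->
  (forall x t, 0 <= t -> Rabs (u x t) <= M1) ->
  sup_cont_Cb u -> sup_cont_Cb X -> sup_derivative X (rhs eps X u) ->
  (forall t, 0 <= t -> forall x, X (x+2*PI) t = X x t) ->
  RInt (fun x => Rabs (X x 0)) (-PI) PI <= K ->
  forall t, 0 <= t -> RInt (fun x => Rabs (X x t)) (-PI) PI <= K.
Proof.
  intros he hM Hper Hub Hu HX Hder HXp H0.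
  assert (cX : forall r, 0 <= r -> forall x, continuous (fun y => X y r) x) by (intros r hr; exact (proj1 (proj1 HX r hr))).
  assert (cU : forall r, 0 <= r -> forall x, continuous (fun y => u y r) x) by (intros r hr; exact (proj1 (proj1 Hu r hr))).
  assert (cAX : forall r, 0 <= r -> forall x, continuous (fun y => Rabs (X y r)) x) by (intros; apply cabs; apply cX; auto).
  assert (hPI := PI_RGT_0).
  assert (Main : forall eta, 0 < eta -> forall b, 0 <= b -> forall r, 0 <= r <= b ->
            RInt (fun x => Rabs (X x r)) (-PI) PI <= K + eta * r).
  { intros eta heta b hb.
    apply (real_ind 0 b (fun r => RInt (fun x => Rabs (X x r)) (-PI) PI <= K + eta * r)).
    - exact hb.
    - lra.
    - intros t Ht Hprev. apply Rle_plus_epsilon; intros g hg.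
      destruct (proj2 HX t ltac:(lra) (g/(2*PI)) ltac:(apply Rdiv_lt_0_compat; lra)) as [dl [hdl Hdl]].
      set (r := t - Rmin dl t / 2).
      assert (Hm1 : Rmin dl t <= dl) by apply Rmin_l.
      assert (Hm2 : Rmin dl t <= t) by apply Rmin_r.
      assert (Hm3 : 0 < Rmin dl t) by (apply Rmin_pos; lra).
      assert (Hr : 0 <= r < t) by (unfold r; lra).
      assert (Hrt : Rabs (r - t) < dl) by (unfold r; rewrite Rabs_left; lra).
      pose proof (Hprev r Hr) as P0.
      assert (I : RInt (fun x => Rabs (X x t)) (-PI) PI <= RInt (fun x => Rabs (X x r) + g/(2*PI)) (-PI) PI).
      { apply RInt_le. lra. apply exR. apply cAX. lra.
        apply exR. intro x. apply cplus. apply cAX; lra. apply cconst.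
        intros x _. pose proof (Hdl r ltac:(lra) Hrt x).
        pose proof (Rabs_triang_inv (X x t) (X x r)). rewrite Rabs_minus_sym in H. lra. }
      rewrite int_const_add in I by (apply cAX; lra).
      replace (2 * PI * (g / (2 * PI))) with g in I by (field; lra).
      assert (eta * r <= eta * t) by (apply Rmult_le_compat_l; lra).
      lra.
    - intros t Ht Gt.
      destruct (Hder t ltac:(lra) (eta/(2*PI)) ltac:(apply Rdiv_lt_0_compat; lra)) as [d [hd Hd]].
      exists (Rmin d (eps/M1)). split. apply Rmin_pos. lra. apply Rdiv_lt_0_compat; lra.
      intros s Hs Hsb.
      assert (Hm1 : Rmin d (eps/M1) <= d) by apply Rmin_l.
      assert (Hm2 : Rmin d (eps/M1) <= eps/M1) by apply Rmin_r.
      set (h := s - t).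
      assert (hh : 0 < h) by (unfold h; lra).
      assert (hhM : h * M1 <= eps).
      { apply Rle_trans with (eps / M1 * M1). apply Rmult_le_compat_r; unfold h; lra. right; field; lra. }
      assert (hst : Rabs (s - t) < d) by (rewrite Rabs_pos_eq; lra).
      set (A := fun y => upos (u y t) * Rabs (X y t)).
      set (B := fun y => uneg (u y t) * Rabs (X y t)).
      assert (cA : forall x, continuous A x) by (intro; unfold A; apply cmul; [apply cupos; apply cU; lra | apply cAX; lra]).
      assert (cB : forall x, continuous B x) by (intro; unfold B; apply cmul; [apply cuneg; apply cU; lra | apply cAX; lra]).
      assert (pA : forall x, A (x + 2*PI) = A x).
      { intro x. unfold A. rewrite (HXp t ltac:(lra) x). rewrite (Hper t ltac:(lra) x). reflexivity. }
      assert (pB : forall x, B (x + 2*PI) = B x).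
      { intro x. unfold B. rewrite (HXp t ltac:(lra) x). rewrite (Hper t ltac:(lra) x). reflexivity. }
      assert (I : RInt (fun x => Rabs (X x s)) (-PI) PI <=
                  RInt (fun x => Rabs (X x t) + h/eps * (A (x - eps) - A x) + h/eps * (B (x + eps) - B x) + eta/(2*PI)*h) (-PI) PI).
      { apply RInt_le. lra. apply exR. apply cAX. lra.
        apply exR. intro x. repeat apply cplus; try apply cconst; try apply cAX; try lra.
        apply cmul. apply cconst. apply cplus. apply cshift; exact cA.
          apply (continuous_ext (fun y => (-1) * A y)). intro; apply neg1. apply cmul. apply cconst. apply cA.
        apply cmul. apply cconst. apply cplus. apply cshift; exact cB.
          apply (continuous_ext (fun y => (-1) * B y)). intro; apply neg1. apply cmul. apply cconst. apply cB.
        intros x _.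
        pose proof (Hd s ltac:(lra) ltac:(lra) hst x) as Q. fold h in Q.
        assert (Q2 : Rabs (X x s - (X x t + h * rhs eps X u x t)) <= eta/(2*PI) * h).
        { replace (X x s - (X x t + h * rhs eps X u x t)) with (h * ((X x s - X x t) / h - rhs eps X u x t)) by (field; lra).
          rewrite Rabs_mult, Rabs_pos_eq by lra. rewrite Rmult_comm. apply Rmult_le_compat_r; lra. }
        pose proof (pos_comb h eps (X (x - eps) t) (X x t) (X (x + eps) t) (u (x - eps) t) (u x t) (u (x + eps) t) M1
                      he ltac:(lra) hhM (Hub x t ltac:(lra))) as PC.
        unfold rhs in Q2.
        pose proof (Rabs_triang_inv (X x s) (X x t + h * (/ eps * (X (x - eps) t * upos (u (x - eps) t) - X x t * Rabs (u x t) +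
          X (x + eps) t * uneg (u (x + eps) t))))).
        unfold A, B. lra. }
      rewrite int_combo in I by (auto; apply cAX; lra).
      replace (2 * PI * (eta / (2 * PI) * h)) with (eta * h) in I by (field; lra).
      unfold h in I. lra. }
  intros t Ht. apply Rle_plus_epsilon. intros g hg.
  pose proof (Main (g/(t+1)) ltac:(apply Rdiv_lt_0_compat; lra) t Ht t ltac:(lra)).
  assert (g / (t+1) * t <= g).
  { apply Rle_trans with (g/(t+1) * (t+1)). apply Rmult_le_compat_l. left; apply Rdiv_lt_0_compat; lra. lra. right; field; lra. }
  lra.
Qed.

Lemma window (f : R -> R) (K : R) : (forall x, continuous f x) -> (forall x, f (x + 2*PI) = f x) ->
  RInt f (-PI) PI <= K -> forall (N : nat) c, RInt f c (c + 2*PI*INR N) <= INR N * K.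
Proof.
  intros Hc Hp HK. induction N as [|N IH]; intros c.
  - simpl. rewrite Rmult_0_r, Rplus_0_r, RInt_point. change (0 <= 0 * K). lra.
  - rewrite <- (RInt_Chasles f c (c + 2*PI*INR N)) by (apply exR; exact Hc).
    rewrite S_INR.
    assert (E : RInt f (c + 2 * PI * INR N) (c + 2 * PI * (INR N + 1)) = RInt f (-PI) PI).
    { pose proof (per_shift f (c + 2*PI*INR N + PI) (-PI) Hc Hp) as E.
      replace (- PI + (c + 2 * PI * INR N + PI)) with (c + 2 * PI * INR N) in E by ring.
      replace (c + 2 * PI * INR N + 2 * PI) with (c + 2 * PI * (INR N + 1)) in E by ring.
      rewrite E. f_equal. ring. }
    rewrite E. pose proof (IH c). change (RInt f c (c + 2 * PI * INR N) + RInt f (- PI) PI <= (INR N + 1) * K). lra.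
Qed.

Lemma sub_window (f : R -> R) a A B b : (forall x, continuous f x) -> (forall x, 0 <= f x) ->
  a <= A -> A <= B -> B <= b -> RInt f A B <= RInt f a b.
Proof.
  intros Hc Hp h1 h2 h3.
  rewrite <- (RInt_Chasles f a A b) by (apply exR; exact Hc).
  rewrite <- (RInt_Chasles f A B b) by (apply exR; exact Hc).
  assert (0 <= RInt f a A) by (apply RInt_ge_0; auto; apply exR; exact Hc).
  assert (0 <= RInt f B b) by (apply RInt_ge_0; auto; apply exR; exact Hc).
  change (RInt f A B <= RInt f a A + (RInt f A B + RInt f B b)). lra.
Qed.

Lemma is_RInt_val (f : R -> R) a b (l l' : R) : is_RInt f a b l -> l = l' -> is_RInt f a b l'.
Proof. intros H e; rewrite <- e; exact H. Qed.

Lemma conv_local (h : R -> R) (A B : R) : A <= B -> ex_RInt h A B ->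
  (forall y, y < A \/ B < y -> h y = 0) ->
  RInt_gen h (Rbar_locally m_infty) (Rbar_locally p_infty) = RInt h A B.
Proof.
  intros hAB hex hz.
  apply (@is_RInt_gen_unique R_CompleteNormedModule).
  1,2: apply _. unfold is_RInt_gen, filterlimi, filter_le. intros P HP. unfold filtermapi.
  apply Filter_prod with (Q := fun a => a < A) (R := fun b => B < b).
  - exists A. auto.
  - exists B. auto.
  - intros a b ha hb. exists (RInt h A B). split; [|apply locally_singleton; exact HP].
    simpl.
    assert (Z1 : is_RInt h a A 0).
    { apply (is_RInt_ext (fun _ => 0)). intros x Hx. rewrite Rmin_left in Hx by lra. rewrite Rmax_right in Hx by lra.
      symmetry; apply hz; lra.
      pose proof (@is_RInt_const R_NormedModule a A 0). apply (is_RInt_val _ _ _ _ _ H). unfold scal; simpl; unfold mult; simpl; ring. }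
    assert (Z2 : is_RInt h B b 0).
    { apply (is_RInt_ext (fun _ => 0)). intros x Hx. rewrite Rmin_left in Hx by lra. rewrite Rmax_right in Hx by lra.
      symmetry; apply hz; lra.
      pose proof (@is_RInt_const R_NormedModule B b 0). apply (is_RInt_val _ _ _ _ _ H). unfold scal; simpl; unfold mult; simpl; ring. }
    pose proof (is_RInt_Chasles _ _ _ _ _ _ (is_RInt_Chasles _ _ _ _ _ _ Z1 (RInt_correct _ _ _ hex)) Z2) as L.
    apply (is_RInt_val _ _ _ _ _ L). unfold plus; simpl. ring.
Qed.

Lemma aux1 z y : z + (-1) * y = z - y.
Proof. ring. Qed.

Lemma cdiv (d : R) x : continuous (fun w : R => w / d) x.
Proof. apply (continuous_ext (fun w => w * / d)). intro; reflexivity. apply cmul. apply continuous_id. apply cconst. Qed.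

Lemma cont_pt (f : R -> R) x : continuous f x -> continuity_pt f x.
Proof. intros H. apply continuity_pt_filterlim. exact H. Qed.

Lemma Derive_moll (c d y : R) (phi : R -> R) x : (forall z, ex_derive phi z) -> 0 < d ->
  Derive (fun u => c * mollif phi d (u - y)) x = c * (/ d * (/ d * Derive phi ((x - y) / d))).
Proof.
  intros Hp hd. apply is_derive_unique. unfold mollif. auto_derive. apply Hp.
  change (fun x0 : R => phi x0) with phi.
  replace ((x + - y) * / d) with ((x - y) / d) by reflexivity. ring.
Qed.

Lemma conv_bounds (f phi : R -> R) (d Rs W Bp Bd I x : R) :
  0 < d <= 1 -> (forall y, continuous f y) -> (forall y, ex_derive phi y) -> (forall y, continuous (Derive phi) y) ->
  (forall y, Rs < Rabs y -> phi y = 0) -> 0 <= Rs -> W = Rs + 1 ->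
  (forall y, Rabs (phi y) <= Bp) -> (forall y, Rabs (Derive phi y) <= Bd) ->
  RInt (fun y => Rabs (f y)) (x - W) (x + W) <= I ->
  Rabs (conv f (mollif phi d) x) <= Bp / d * I /\ ex_derive (fun z => conv f (mollif phi d) z) x /\
  Rabs (Derive (fun z => conv f (mollif phi d) z) x) <= Bd / (d*d) * I.
Proof.
  intros hd Hf Hp HDp Hsupp hRs hW HBp HBd HI.
  set (A := x - W). set (B := x + W).
  assert (cphi : forall y, continuous phi y) by (intro; apply (@ex_derive_continuous R_AbsRing R_NormedModule); apply Hp).
  assert (cg : forall z y, continuous (fun y0 => f y0 * mollif phi d (z - y0)) y).
  { intros z y. apply cmul. apply Hf. unfold mollif. apply cmul. apply cconst.
    apply (continuous_comp (fun y0 => (z - y0) / d) phi).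
    apply (continuous_comp (fun y0 => z - y0) (fun w => w / d)).
    apply (continuous_ext (fun y0 => z + (-1) * y0)). intro; apply aux1.
    apply cplus. apply cconst. apply cmul. apply cconst. apply continuous_id.
    apply cdiv. apply cphi. }
  assert (zero_out : forall z y, Rabs (z - x) < 1 -> y < A \/ B < y -> f y * mollif phi d (z - y) = 0).
  { intros z y hz hy. unfold mollif. rewrite Hsupp. ring.
    unfold Rdiv. rewrite Rabs_mult. rewrite Rabs_inv. rewrite (Rabs_pos_eq d) by lra.
    assert (Rs < Rabs (z - y)).
    { unfold A, B in hy. rewrite hW in hy. unfold Rabs in hz |- *.
      destruct (Rcase_abs (z - x)); destruct (Rcase_abs (z - y)); lra. }
    apply Rlt_le_trans with (Rabs (z - y)). lra.
    rewrite <- (Rmult_1_r (Rabs (z - y))) at 1. apply Rmult_le_compat_l. apply Rabs_pos.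
    rewrite <- Rinv_1. apply Rinv_le_contravar; lra. }
  assert (hAB : A <= B) by (unfold A, B; lra).
  assert (Hloc : forall z, Rabs (z - x) < 1 ->
             conv f (mollif phi d) z = RInt (fun y => f y * mollif phi d (z - y)) A B).
  { intros z hz. unfold conv. apply conv_local. exact hAB. apply exR. apply cg.
    intros y hy. apply zero_out; auto. }
  set (gp := fun w => / d * (/ d * Derive phi (w / d))).
  assert (cgp : forall w, continuous gp w).
  { intro w. unfold gp. apply cmul. apply cconst. apply cmul. apply cconst.
    apply (continuous_comp (fun w => w / d) (Derive phi)). apply cdiv. apply HDp. }
  assert (HD : is_derive (fun z => RInt (fun y => f y * mollif phi d (z - y)) A B) x
                 (RInt (fun y => f y * gp (x - y)) A B)).
  { pose proof (is_derive_RInt_param (fun z y => f y * mollif phi d (z - y)) A B x) as P.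
    assert (E : RInt (fun t => Derive (fun u => f t * mollif phi d (u - t)) x) A B = RInt (fun y => f y * gp (x - y)) A B).
    { apply RInt_ext. intros y _. rewrite Derive_moll; auto. lra. }
    rewrite <- E. apply P.
    - exists (mkposreal 1 Rlt_0_1). intros z _ t _. unfold mollif. auto_derive. apply Hp.
    - intros t _. apply (continuity_2d_pt_ext (fun u v => f v * gp (u - v))).
      intros u v. rewrite Derive_moll; auto. lra.
      apply continuity_2d_pt_mult.
      apply (continuity_1d_2d_pt_comp f (fun _ v => v)). apply cont_pt, Hf. apply continuity_2d_pt_id2.
      apply (continuity_1d_2d_pt_comp gp (fun u v => u - v)). apply cont_pt, cgp.
      apply continuity_2d_pt_minus. apply continuity_2d_pt_id1. apply continuity_2d_pt_id2.
    - exists (mkposreal 1 Rlt_0_1). intros z _. apply exR. apply cg. }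
  assert (HD' : is_derive (fun z => conv f (mollif phi d) z) x (RInt (fun y => f y * gp (x - y)) A B)).
  { apply (is_derive_ext_loc (fun z => RInt (fun y => f y * mollif phi d (z - y)) A B)); [|exact HD].
    exists (mkposreal 1 Rlt_0_1). intros z Hz. symmetry. apply Hloc.
    exact Hz. }
  assert (cAf : forall y, continuous (fun y0 => Rabs (f y0)) y) by (intro; apply cabs; apply Hf).
  split; [|split].
  - rewrite Hloc by (rewrite Rminus_diag, Rabs_R0; lra).
    eapply Rle_trans. apply abs_RInt_le. exact hAB. apply exR. apply cg.
    eapply Rle_trans. apply RInt_le with (g := fun y => Bp / d * Rabs (f y)). exact hAB.
    apply exR. intro; apply cabs; apply cg. apply exR. intro; apply cmul. apply cconst. apply cAf.
    intros y _. rewrite Rabs_mult, (Rmult_comm (Rabs (f y))). apply Rmult_le_compat_r. apply Rabs_pos.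
    unfold mollif. rewrite Rabs_mult, Rabs_inv, (Rabs_pos_eq d) by lra.
    apply Rle_trans with (/d * Bp). apply Rmult_le_compat_l. left; apply Rinv_0_lt_compat; lra. apply HBp. right; unfold Rdiv; ring.
    rewrite (RInt_scal (V := R_CompleteNormedModule) (fun y => Rabs (f y))) by (apply exR; apply cAf).
    change (Bp / d * RInt (fun y : R => Rabs (f y)) A B <= Bp / d * I).
    apply Rmult_le_compat_l. apply Rmult_le_pos. apply Rle_trans with (Rabs (phi 0)). apply Rabs_pos. apply HBp.
    left; apply Rinv_0_lt_compat; lra. exact HI.
  - exists (RInt (fun y => f y * gp (x - y)) A B). exact HD'.
  - replace (Derive (fun z => conv f (mollif phi d) z) x) with (RInt (fun y => f y * gp (x - y)) A B)
      by (symmetry; apply is_derive_unique; exact HD').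
    assert (cgx : forall y, continuous (fun y0 => gp (x - y0)) y).
    { intro y. apply (continuous_comp (fun y0 => x - y0) gp). 
      apply (continuous_ext (fun y0 => x + (-1) * y0)). intro; apply aux1.
      apply cplus. apply cconst. apply cmul. apply cconst. apply continuous_id. apply cgp. }
    eapply Rle_trans. apply abs_RInt_le. exact hAB. apply exR. intro; apply cmul. apply Hf. apply cgx.
    eapply Rle_trans. apply RInt_le with (g := fun y => Bd / (d*d) * Rabs (f y)). exact hAB.
    apply exR. intro; apply cabs; apply cmul. apply Hf. apply cgx. apply exR. intro; apply cmul. apply cconst. apply cAf.
    intros y _. rewrite Rabs_mult, (Rmult_comm (Rabs (f y))). apply Rmult_le_compat_r. apply Rabs_pos.
    unfold gp. rewrite !Rabs_mult, Rabs_inv, (Rabs_pos_eq d) by lra.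
    apply Rle_trans with (/d * (/d * Bd)). apply Rmult_le_compat_l. left; apply Rinv_0_lt_compat; lra.
    apply Rmult_le_compat_l. left; apply Rinv_0_lt_compat; lra. apply HBd. right; field; lra.
    rewrite (RInt_scal (V := R_CompleteNormedModule) (fun y => Rabs (f y))) by (apply exR; apply cAf).
    change (Bd / (d*d) * RInt (fun y : R => Rabs (f y)) A B <= Bd / (d*d) * I).
    apply Rmult_le_compat_l. apply Rmult_le_pos. apply Rle_trans with (Rabs (Derive phi 0)). apply Rabs_pos. apply HBd.
    left; apply Rinv_0_lt_compat. apply Rmult_lt_0_compat; lra. exact HI.
Qed.

Theorem mainTheorem2
  (u : R -> R -> R -> R) (v0 : R -> R -> R) (X : R -> R -> R -> R)
  (phi : R -> R) (alpha M1 : R) :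
  (* hypotheses on u^eps *)
  0 < M1 ->
  (forall eps, 0 < eps < 1 ->
     (forall t, 0 <= t -> periodic2pi (fun x => u eps x t)) /\
     sup_cont_Cb (u eps) /\
     (forall x t, 0 <= t -> Rabs (u eps x t) <= M1)) ->
  (* hypotheses on v0^eps *)
  (forall eps, 0 < eps < 1 -> Cb (v0 eps) /\ periodic2pi (v0 eps)) ->
  (exists K, forall eps, 0 < eps < 1 ->
     RInt (fun x => Rabs (v0 eps x)) (- PI) PI <= K) ->
  (* X^eps is a global C^1 solution [0,oo) -> C_b(R) of the ODE *)
  (forall eps, 0 < eps < 1 ->
     sup_cont_Cb (X eps) /\
     sup_derivative (X eps) (rhs eps (X eps) (u eps)) /\
     (forall x, X eps x 0 = v0 eps x)) ->
  (* the mollifier *)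
  smooth phi ->
  (exists Rs, forall x, Rs < Rabs x -> phi x = 0) ->
  is_RInt_gen phi (Rbar_locally m_infty) (Rbar_locally p_infty) 1 ->
  0 < alpha <= 1 ->
  exists M2, 0 < M2 /\
    forall eps, 0 < eps < 1 -> forall x t, 0 <= t ->
      let v := fun z => conv (fun y => X eps y t) (mollif phi (Rpower eps alpha)) z in
      Rabs (v x) <= M2 / Rpower eps alpha /\
      ex_derive v x /\
      Rabs (Derive v x) <= M2 / Rpower eps (2 * alpha).
Proof.
  intros hM1 Hu Hv0 [K HK] HX Hsm [Rs0 HRs0] _ halpha.
  set (Rs := Rabs Rs0 + 1).
  assert (hRs : 0 <= Rs) by (unfold Rs; pose proof (Rabs_pos Rs0); lra).
  assert (Hsupp : forall y, Rs < Rabs y -> phi y = 0).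
  { intros y hy. apply HRs0. unfold Rs in hy. pose proof (Rle_abs Rs0). lra. }
  set (W := Rs + 1).
  assert (Hp : forall y, ex_derive phi y) by (intro y; exact (Hsm 1%nat y)).
  assert (Hp2 : forall y, ex_derive (Derive phi) y) by (intro y; exact (Hsm 2%nat y)).
  assert (HDp : forall y, continuous (Derive phi) y)
    by (intro; apply (@ex_derive_continuous R_AbsRing R_NormedModule); apply Hp2).
  assert (cphi : forall y, continuous phi y)
    by (intro; apply (@ex_derive_continuous R_AbsRing R_NormedModule); apply Hp).
  destruct (continuity_ab_maj (fun y => Rabs (phi y)) (-Rs) Rs ltac:(lra)) as [m1 [Hm1 _]].
  { intros c _. apply cont_pt. apply cabs. apply cphi. }
  destruct (continuity_ab_maj (fun y => Rabs (Derive phi y)) (-Rs) Rs ltac:(lra)) as [m2 [Hm2 _]].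
  { intros c _. apply cont_pt. apply cabs. apply HDp. }
  set (Bp := Rabs (phi m1)). set (Bd := Rabs (Derive phi m2)).
  assert (HBp : forall y, Rabs (phi y) <= Bp).
  { intro y. destruct (Rle_or_lt (Rabs y) Rs) as [h|h].
    - apply Hm1. unfold Rabs in h; destruct (Rcase_abs y); lra.
    - rewrite Hsupp by exact h. rewrite Rabs_R0. apply Rabs_pos. }
  assert (HBd : forall y, Rabs (Derive phi y) <= Bd).
  { intro y. destruct (Rle_or_lt (Rabs y) Rs) as [h|h].
    - apply Hm2. unfold Rabs in h; destruct (Rcase_abs y); lra.
    - assert (E : Derive phi y = Derive (fun _ => 0) y).
      { apply Derive_ext_loc. exists (mkposreal 1 Rlt_0_1). intros z Hz. apply HRs0.
        change (Rabs (z - y) < 1) in Hz. unfold Rs in h.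
        pose proof (Rle_abs Rs0).
        unfold Rabs in Hz, h |- *. destruct (Rcase_abs (z - y)); destruct (Rcase_abs y); destruct (Rcase_abs z);
          destruct (Rcase_abs Rs0); lra. }
      rewrite E, Derive_const, Rabs_R0. apply Rabs_pos. }
  assert (hPI := PI_RGT_0).
  destruct (INR_archimed (2*PI) (2*W) ltac:(lra)) as [N HN].
  set (K' := Rmax K 0).
  assert (hK' : K <= K' /\ 0 <= K') by (split; [apply Rmax_l | apply Rmax_r]).
  assert (hBp : 0 <= Bp) by apply Rabs_pos.
  assert (hBd : 0 <= Bd) by apply Rabs_pos.
  assert (hN := pos_INR N).
  assert (hNK : 0 <= INR N * K') by (apply Rmult_le_pos; lra).
  exists ((Bp + Bd + 1) * (INR N * K' + 1)). split. apply Rmult_lt_0_compat; lra.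
  intros eps heps x t ht v.
  destruct (Hu eps heps) as [Hper [Hucont Hub]].
  destruct (Hv0 eps heps) as [[cv0 _] pv0].
  destruct (HX eps heps) as [HXc [HXd HX0]].
  assert (HXp : forall t, 0 <= t -> forall x, X eps (x + 2*PI) t = X eps x t).
  { apply (X_periodic eps M1 (u eps) (X eps)); try lra; auto.
    intro y. rewrite !HX0. apply pv0. }
  assert (HL1 : RInt (fun y => Rabs (X eps y t)) (-PI) PI <= K).
  { apply (L1_bound eps M1 K (u eps) (X eps)); try lra; auto.
    rewrite (RInt_ext _ (fun y => Rabs (v0 eps y))). apply HK; auto.
    intros y _. rewrite HX0. reflexivity. }
  assert (cf : forall y, continuous (fun y0 => X eps y0 t) y) by (exact (proj1 (proj1 HXc t ht))).
  assert (HI : RInt (fun y => Rabs (X eps y t)) (x - W) (x + W) <= INR N * K').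
  { apply Rle_trans with (RInt (fun y => Rabs (X eps y t)) (x - W) (x - W + 2*PI*INR N)).
    apply sub_window; try lra. intro; apply cabs; apply cf. intro; apply Rabs_pos.
    unfold W; lra.
    eapply Rle_trans. apply window with (K := K). intro; apply cabs; apply cf.
    intro y. rewrite HXp by exact ht. reflexivity. exact HL1.
    apply Rmult_le_compat_l; lra. }
  set (d := Rpower eps alpha).
  assert (hd : 0 < d <= 1).
  { unfold d, Rpower. split. apply exp_pos.
    rewrite <- exp_0. destruct (Req_dec (alpha * ln eps) 0) as [e|ne]. rewrite e; lra.
    left. apply exp_increasing.
    assert (ln eps < 0) by (rewrite <- ln_1; apply ln_increasing; lra). nra. }
  assert (Hd2 : Rpower eps (2 * alpha) = d * d).
  { unfold d. replace (2 * alpha) with (alpha + alpha) by ring. apply Rpower_plus. }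
  pose proof (conv_bounds (fun y => X eps y t) phi d Rs W Bp Bd (INR N * K') x hd cf Hp HDp Hsupp hRs
                eq_refl HBp HBd HI) as [B1 [B2 B3]].
  unfold v. cbv beta. fold d. rewrite Hd2.
  split; [|split].
  - eapply Rle_trans. exact B1. unfold Rdiv. rewrite !(Rmult_comm _ (/ d)). rewrite Rmult_assoc.
    apply Rmult_le_compat_l. left; apply Rinv_0_lt_compat; lra. nra.
  - exact B2.
  - eapply Rle_trans. exact B3. unfold Rdiv. rewrite !(Rmult_comm _ (/ (d * d))). rewrite Rmult_assoc.
    apply Rmult_le_compat_l. left; apply Rinv_0_lt_compat; nra. nra.
Qed.
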